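(* Let $E,F$ be nondeterministic expressions, $P$ a probabilistic expression, $X$ a variable and $0<p<1$. Then $\mathrm{rec}\,X.(\tau.(\partial(X+E)\oplus_pP)+F)\ \simeq\ \mathrm{rec}\,X.(\tau.(\partial(X+E)\oplus_pP)+\tau.P+F)$.
   Context: Fix a set $\mathsf{Act}$ of actions containing $\tau$ and a set $\mathsf{Var}$ of variables. Nondeterministic expressions: $E ::= 0 \mid X \mid \alpha.P \mid \mathrm{rec}\,X.E \mid E + E$; probabilistic expressions: $P ::= \partial(E) \mid P \oplus_p P$ ($0<p<1$). $\mathrm{rec}\,X$ binds $X$; closed means no free variables; $E[\vec F/\vec X]$ is capture-avoiding substitution. Subdistributions $\mu$ over $S$: $\mu:S\to\mathbb R_{\ge0}$, $|\mu|=\sum\mu(s)\le1$; $\delta_s$ Dirac. Semantics: least relations with $\partial(E)\mapsto\delta_E$; $P\oplus_pQ\mapsto p\mu+(1-p)\nu$ if $P\mapsto\mu,Q\mapsto\nu$; $\alpha.P\xrightarrow{\alpha}\mu$ if $P\mapsto\mu$; $\mathrm{rec}\,X.E\xrightarrow{\alpha}\mu$ if $E[\mathrm{rec}\,X.E/X]\xrightarrow{\alpha}\mu$; $E+F\xrightarrow{\alpha}\mu$ and $F+E\xrightarrow{\alpha}\mu$ if $E\xrightarrow{\alpha}\mu$. Combined transitions on subdistributions: least relation with $\delta_E\xrightarrow{\alpha}\mu$ if $E\xrightarrow{\alpha}\mu$, closed under $\sum p_i\nu_i\xrightarrow{\alpha}\sum p_i\mu_i$ ($\nu_i\xrightarrow{\alpha}\mu_i$,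 $p_i\ge0$, $\sum p_i\le1$). A derivation is $(\mu_i^{\to},\mu_i^{\times})_{i\in\mathbb N}$ with $\mu_i^{\to}\xrightarrow{\tau}\mu^{\to}_{i+1}+\mu^{\times}_{i+1}$; $\mu\Rightarrow\nu$ iff a derivation has $\mu=\mu_0^{\to}+\mu_0^{\times}$, $\nu=\sum_i\mu_i^\times$. $\mu\xRightarrow{\alpha}\nu$ iff $\mu\Rightarrow\xrightarrow{\alpha}\Rightarrow\nu$; $\xRightarrow{\hat\alpha}$ is $\Rightarrow$ for $\alpha=\tau$, else $\xRightarrow{\alpha}$. Lifting of a relation to subdistributions: least relation with $\delta_E\mathcal R\delta_F$ for $E\mathcal RF$, closed under convex combinations with coefficients summing to at most 1. Weak bisimulation on closed expressions: if $E\mathcal RF$ and $E\xrightarrow{\alpha}\mu$ then $F\xRightarrow{\hat\alpha}\nu$ with $\mu\mathcal R\nu$, and symmetrically; $\approx$ is weak bisimilarity. For closed $E,F$: $E\simeq F$ iff $E\xrightarrow{\alpha}\mu$ implies $F\xRightarrow{\alpha}\nu$ with $\mu\approx\nu$ and $F\xrightarrow{\alpha}\nu$ implies $E\xRightarrow{\alpha}\mu$ with $\mu\approx\nu$. For open expressions with free variables $\vec X$: $E\simeq F$ iff $E[\vec G/\vec X]\simeq F[\vec G/\vec X]$ for all closed $\vec G$. *)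

(* Defs.v *)
From Stdlib Require Import Reals List ClassicalEpsilon.
Open Scope R_scope.
Set Implicit Arguments.

Inductive act (L : Type) : Type := tau | vis (l : L).
Arguments tau {L}.

Definition prob := { p : R | 0 < p < 1 }.

Inductive nexpr (L V : Type) : Type :=
| N0 : nexpr L V
| NVar : V -> nexpr L V
| NPre : act L -> pexpr L V -> nexpr L V
| NRec : V -> nexpr L V -> nexpr L V
| NSum : nexpr L V -> nexpr L V -> nexpr L V
with pexpr (L V : Type) : Type :=
| PDirac : nexpr L V -> pexpr L V
| PChoice : pexpr L V -> pexpr L V -> prob -> pexpr L V.
Arguments N0 {L V}. Arguments NVar {L V}. Arguments NPre {L V}. Arguments NRec {L V}. Arguments NSum {L V}. Arguments PDirac {L V}. Arguments PChoice {L V}.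

Definition eqdec {T : Type} (x y : T) : bool :=
  if excluded_middle_informative (x = y) then true else false.

Section Calculus.
Variables L V : Type.
Notation nexpr := (nexpr L V).
Notation pexpr := (pexpr L V).

Fixpoint freeN (x : V) (E : nexpr) : Prop :=
  match E with
  | N0 => False
  | NVar y => x = y
  | NPre a P => freeP x P
  | NRec y E' => x <> y /\ freeN x E'
  | NSum E1 E2 => freeN x E1 \/ freeN x E2
  end
with freeP (x : V) (P : pexpr) : Prop :=
  match P with
  | PDirac E => freeN x E
  | PChoice P1 P2 _ => freeP x P1 \/ freeP x P2
  end.

Definition closedN (E : nexpr) : Prop := forall x, ~ freeN x E.

(* Simultaneous substitution; [s y = Some G] replaces free y by G.
   Only ever used with closed G, so no capture can occur. *)
Fixpoint substN (s : V -> option nexpr) (E : nexpr) : nexpr :=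
  match E with
  | N0 => N0
  | NVar y => match s y with Some G => G | None => NVar y end
  | NPre a P => NPre a (substP s P)
  | NRec y E' => NRec y (substN (fun z => if eqdec z y then None else s z) E')
  | NSum E1 E2 => NSum (substN s E1) (substN s E2)
  end
with substP (s : V -> option nexpr) (P : pexpr) : pexpr :=
  match P with
  | PDirac E => PDirac (substN s E)
  | PChoice P1 P2 p => PChoice (substP s P1) (substP s P2) p
  end.

Definition subst1 (X : V) (G E : nexpr) : nexpr :=
  substN (fun z => if eqdec z X then Some G else None) E.

Definition dist := nexpr -> R.

Definition dirac (E : nexpr) : dist :=
  fun s => if eqdec s E then 1 else 0.

Definition subdist (d : dist) : Prop :=
  (forall s, 0 <= d s) /\
  (forall l : list nexpr, NoDup l -> fold_right (fun s acc => d s + acc) 0 l <= 1).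

Definition weights (p : nat -> R) : Prop :=
  (forall i, 0 <= p i) /\ (forall n, sum_f_R0 p n <= 1).

Definition is_comb (p : nat -> R) (nus : nat -> dist) (mu : dist) : Prop :=
  forall s, infinite_sum (fun i => p i * nus i s) (mu s).

Inductive psem : pexpr -> dist -> Prop :=
| ps_dirac E mu : (forall s, mu s = dirac E s) -> psem (PDirac E) mu
| ps_choice P Q (p : prob) mu nu rho :
    psem P mu -> psem Q nu ->
    (forall s, rho s = proj1_sig p * mu s + (1 - proj1_sig p) * nu s) ->
    psem (PChoice P Q p) rho.

Inductive step : nexpr -> act L -> dist -> Prop :=
| st_pre a P mu : psem P mu -> step (NPre a P) a mu
| st_rec X E a mu : step (subst1 X (NRec X E) E) a mu -> step (NRec X E) a mu
| st_suml E F a mu : step E a mu -> step (NSum E F) a mu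
| st_sumr E F a mu : step F a mu -> step (NSum E F) a mu.

Inductive ctrans : dist -> act L -> dist -> Prop :=
| ct_base E a d mu : (forall s, d s = dirac E s) -> step E a mu -> ctrans d a mu
| ct_comb (p : nat -> R) (nus mus : nat -> dist) a nu mu :
    weights p ->
    (forall i, 0 < p i -> ctrans (nus i) a (mus i)) ->
    is_comb p nus nu -> is_comb p mus mu -> ctrans nu a mu.

Definition wtau (mu nu : dist) : Prop :=
  exists mt mx : nat -> dist,
    (forall i, subdist (mt i) /\ subdist (mx i)) /\
    (forall i, ctrans (mt i) tau (fun s => mt (S i) s + mx (S i) s)) /\
    (forall s, mu s = mt 0%nat s + mx 0%nat s) /\
    (forall s, infinite_sum (fun i => mx i s) (nu s)).

Definition wtrans (mu : dist) (a : act L) (nu : dist) : Prop :=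
  exists m1 m2, wtau mu m1 /\ ctrans m1 a m2 /\ wtau m2 nu.

Definition wtrans_hat (mu : dist) (a : act L) (nu : dist) : Prop :=
  match a with tau => wtau mu nu | vis _ => wtrans mu a nu end.

Inductive lift (Rel : nexpr -> nexpr -> Prop) : dist -> dist -> Prop :=
| lift_base E F d1 d2 : Rel E F ->
    (forall s, d1 s = dirac E s) -> (forall s, d2 s = dirac F s) -> lift Rel d1 d2
| lift_comb (p : nat -> R) (mus nus : nat -> dist) mu nu :
    weights p ->
    (forall i, 0 < p i -> lift Rel (mus i) (nus i)) ->
    is_comb p mus mu -> is_comb p nus nu -> lift Rel mu nu.

Definition is_wbisim (Rel : nexpr -> nexpr -> Prop) : Prop :=
  forall E F, Rel E F ->
    closedN E /\ closedN F /\
    (forall a mu, step E a mu -> exists nu, wtrans_hat (dirac F) a nu /\ lift Rel mu nu) /\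
    (forall a nu, step F a nu -> exists mu, wtrans_hat (dirac E) a mu /\ lift Rel mu nu).

Definition wbisim (E F : nexpr) : Prop :=
  exists Rel, is_wbisim Rel /\ Rel E F.

Definition rcong_closed (E F : nexpr) : Prop :=
  (forall a mu, step E a mu -> exists nu, wtrans (dirac F) a nu /\ lift wbisim mu nu) /\
  (forall a nu, step F a nu -> exists mu, wtrans (dirac E) a mu /\ lift wbisim mu nu).

(* for open expressions: all closed instantiations of the variables
   (for closed E, F this coincides with rcong_closed) *)
Definition rcong (E F : nexpr) : Prop :=
  forall sigma : V -> nexpr, (forall y, closedN (sigma y)) ->
    rcong_closed (substN (fun y => Some (sigma y)) E)
                 (substN (fun y => Some (sigma y)) F).

End Calculus.

(* Main.v *)
Require Import Defs.
From Stdlib Require Import Reals Lra Lia List ClassicalEpsilon.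
Open Scope R_scope.

Lemma eqdec_spec {T : Type} (x y : T) : (x = y /\ eqdec x y = true) \/ (x <> y /\ eqdec x y = false).
Proof. unfold eqdec; destruct (excluded_middle_informative (x=y)); auto. Qed.
Lemma eqdec_true {T : Type} (x : T) : eqdec x x = true.
Proof. unfold eqdec; destruct (excluded_middle_informative (x=x)); congruence. Qed.

Lemma inf_sum_ev f l : (exists N, forall n, (n >= N)%nat -> sum_f_R0 f n = l) -> infinite_sum f l.
Proof.
  intros [N HN] e he. exists N. intros n Hn. rewrite HN by auto.
  unfold Rdist. rewrite Rminus_diag, Rabs_R0. lra.
Qed.

Lemma inf_sum_ext f g l l' : infinite_sum f l -> (forall n, f n = g n) -> l = l' -> infinite_sum g l'.
Proof.
  intros H Hfg <- e he. destruct (H e he) as [N HN]. exists N. intros n Hn.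
  rewrite <- (sum_eq f g n) by auto. auto.
Qed.

Lemma inf_sum_scal f l c : infinite_sum f l -> infinite_sum (fun n => f n * c) (l * c).
Proof.
  intros H.
  assert (Hc : Un_cv (fun _ => c) c).
  { intros e he. exists 0%nat. intros. unfold Rdist. rewrite Rminus_diag, Rabs_R0. lra. }
  pose proof (CV_mult _ _ _ _ H Hc) as Hm.
  intros e he. destruct (Hm e he) as [N HN]. exists N. intros n Hn.
  rewrite <- scal_sum, Rmult_comm. apply HN; auto.
Qed.

Lemma inf_sum_shift f l : infinite_sum f l ->
  infinite_sum (fun i => match i with O => 0 | S k => f k end) l.
Proof.
  intros H.
  assert (Hs : forall n, sum_f_R0 (fun i => match i with O => 0 | S k => f k end) (S n) = sum_f_R0 f n).
  { induction n; simpl in *. ring. rewrite IHn. ring. }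
  intros e he. destruct (H e he) as [N HN]. exists (S N). intros n Hn.
  destruct n as [|m]. lia. rewrite Hs. apply HN. lia.
Qed.

Lemma pow_le1 p n : 0 <= p <= 1 -> 0 <= p ^ n <= 1.
Proof. intros Hp. induction n; simpl; nra. Qed.

Definition single (c : R) : nat -> R := fun i => match i with O => c | S _ => 0 end.

Lemma sum_single c n : sum_f_R0 (single c) n = c.
Proof. induction n; simpl in *; [auto| rewrite IHn; ring]. Qed.

Lemma sum_single_mul c x n : sum_f_R0 (fun i => single c i * x) n = c * x.
Proof. induction n; simpl in *; [auto| rewrite IHn; ring]. Qed.

Lemma weights_single c : 0 <= c <= 1 -> weights (single c).
Proof. intros Hc. split. intros [|i]; simpl; lra. intros n; rewrite sum_single; lra. Qed.

Section Gen.
Variables L V : Type.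
Notation nexpr := (nexpr L V).
Notation pexpr := (pexpr L V).
Notation dist := (Defs.dist L V).

Definition zero : dist := fun _ => 0.

Definition fsum (d : dist) (l : list nexpr) := fold_right (fun s acc => d s + acc) 0 l.

Lemma fsum_lin (h f g : dist) a b l : (forall s, h s = a * f s + b * g s) ->
  fsum h l = a * fsum f l + b * fsum g l.
Proof. intros H; induction l; simpl; [ring|]. unfold fsum in *. rewrite IHl, H. ring. Qed.

Lemma fsum_nonneg (f : dist) l : (forall s, 0 <= f s) -> 0 <= fsum f l.
Proof. intros H; induction l; simpl; unfold fsum in *; [lra|]. specialize (H a). lra. Qed.

Lemma subdist_comb2 (h f g : dist) a b : subdist f -> subdist g -> 0 <= a -> 0 <= b -> a + b <= 1 ->
  (forall s, h s = a * f s + b * g s) -> subdist h.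
Proof.
  intros [f0 f1] [g0 g1] ha hb hab H. split.
  - intros s; rewrite H. specialize (f0 s); specialize (g0 s); nra.
  - intros l Hl. change (fsum h l <= 1). rewrite (fsum_lin h f g a b l H).
    pose proof (f1 l Hl); pose proof (g1 l Hl).
    pose proof (fsum_nonneg f l f0); pose proof (fsum_nonneg g l g0).
    unfold fsum in *. nra.
Qed.

Lemma subdist_zero : subdist zero.
Proof. split. intros; unfold zero; lra. intros l _. induction l; simpl; unfold zero in *; lra. Qed.

Lemma subdist_scale (h f : dist) a : subdist f -> 0 <= a <= 1 -> (forall s, h s = a * f s) -> subdist h.
Proof.
  intros Hf Ha H. apply (subdist_comb2 h f zero a 0); auto; try lra; try apply subdist_zero.
  intros s; rewrite H; unfold zero; ring.
Qed.

Lemma subdist_ext (f g : dist) : subdist g -> (forall s, f s = g s) -> subdist f.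
Proof. intros Hg H. apply (subdist_scale f g 1); auto; try lra. intros; rewrite H; ring. Qed.

Lemma fsum_dirac_notin (E : nexpr) l : ~ In E l -> fsum (dirac E) l = 0.
Proof.
  induction l; simpl; auto. intros H. unfold fsum in *. simpl. rewrite IHl by tauto.
  unfold dirac. destruct (eqdec_spec a E) as [[e ->]|[e ->]]; [exfalso; auto| ring].
Qed.

Lemma subdist_dirac (E : nexpr) : subdist (dirac E).
Proof.
  split. intros s; unfold dirac; destruct (eqdec s E); lra.
  intros l Hl. change (fsum (dirac E) l <= 1). induction Hl; simpl; [lra|].
  unfold fsum in *; simpl.
  unfold dirac at 1. destruct (eqdec_spec x E) as [[e ->]|[e ->]].
  - subst. pose proof (fsum_dirac_notin E l H). unfold fsum in *. lra.
  - lra.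
Qed.

Lemma psem_subdist (P : pexpr) (mu : dist) : psem P mu -> subdist mu.
Proof.
  induction 1.
  - eapply subdist_ext; [apply subdist_dirac|]; auto.
  - destruct p as [p hp]; simpl in *. apply (subdist_comb2 rho mu nu p (1 - p)); auto; lra.
Qed.

Lemma step_subdist (G : nexpr) a (mu : dist) : step G a mu -> subdist mu.
Proof. induction 1; auto. eapply psem_subdist; eauto. Qed.

Lemma psem_exists (P : pexpr) : exists mu, psem P mu.
Proof.
  induction P.
  - exists (dirac n). constructor; auto.
  - destruct IHP1 as [m1 H1], IHP2 as [m2 H2].
    eexists. econstructor; eauto. intros; reflexivity.
Qed.

Lemma psem_fun (P : pexpr) (mu : dist) : psem P mu -> forall nu, psem P nu -> forall s, mu s = nu s.
Proof.
  induction 1 as [E mu He|P Q p mu nu rho HP IH1 HQ IH2 Hr]; intros nu' Hn; inversion Hn; subst; intros s.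
  - match goal with Hx : forall s, nu' s = _ |- _ => rewrite He, Hx end; auto.
  - match goal with Hx : forall s, nu' s = _ |- _ => rewrite Hr, Hx end.
    match goal with H1 : psem P ?m1, H2 : psem Q ?m2 |- _ => rewrite (IH1 _ H1), (IH2 _ H2) end. auto.
Qed.

Lemma ct_single c (d mu t u : dist) a : 0 <= c <= 1 -> (0 < c -> ctrans d a mu) ->
  (forall s, t s = c * d s) -> (forall s, u s = c * mu s) -> ctrans t a u.
Proof.
  intros Hc Hct Ht Hu.
  apply (@ct_comb _ _ (single c) (fun _ => d) (fun _ => mu)); auto using weights_single.
  - intros [|i]; simpl; intros; [auto| lra].
  - intros s. apply inf_sum_ev. exists 0%nat. intros n _. rewrite sum_single_mul; auto.
  - intros s. apply inf_sum_ev. exists 0%nat. intros n _. rewrite sum_single_mul; auto.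
Qed.

Lemma ctrans_ext (d mu mu' : dist) a : ctrans d a mu -> (forall s, mu' s = mu s) -> ctrans d a mu'.
Proof.
  intros H He. apply (ct_single 1 d mu); auto; try lra. intros; ring. intros; rewrite He; ring.
Qed.

Lemma wtau_refl (d : dist) : subdist d -> wtau d d.
Proof.
  intros Hd. exists (fun _ => zero), (fun i => match i with O => d | S _ => zero end).
  split; [|split; [|split]].
  - intros [|i]; split; auto using subdist_zero.
  - intros i. apply (ct_single 0 zero zero); try lra; unfold zero; intros; try lra.
  - intros s; unfold zero; ring.
  - intros s. apply inf_sum_ev. exists 0%nat. intros n _. induction n; simpl; auto.
    rewrite IHn; unfold zero; ring.
Qed.

Lemma wtau_pre (d d' d'' : dist) : ctrans d tau d' -> wtau d' d'' -> subdist d -> wtau d d''.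
Proof.
  intros Hc (mt & mx & Hsd & Hct & H0 & Hsum) Hd.
  exists (fun i => match i with O => d | S k => mt k end),
         (fun i => match i with O => zero | S k => mx k end).
  split; [|split; [|split]].
  - intros [|i]; auto using subdist_zero.
  - intros [|i]; [eapply ctrans_ext; [eauto|]; intros; rewrite H0; auto | auto].
  - intros s; unfold zero; ring.
  - intros s. eapply inf_sum_ext. apply (inf_sum_shift (fun i => mx i s)). auto. intros [|n]; reflexivity. reflexivity.
Qed.

Lemma wtau_geom (G' : nexpr) (p : R) (mu rho : dist) : 0 < p < 1 -> subdist mu -> step G' tau rho ->
  (forall s, rho s = p * dirac G' s + (1 - p) * mu s) -> wtau rho mu.
Proof.
  intros Hp Hmu Hst Hr.
  exists (fun i s => p ^ (S i) * dirac G' s), (fun i s => p ^ i * (1 - p) * mu s).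
  split; [|split; [|split]].
  - intros i. split.
    + apply (subdist_scale _ (dirac G') (p ^ S i)); [apply subdist_dirac| apply pow_le1; lra| intros; reflexivity].
    + apply (subdist_scale _ mu (p ^ i * (1 - p))); [apply Hmu| | intros; reflexivity].
      pose proof (pow_le1 p i ltac:(lra)). nra.
  - intros i. apply (ct_single (p ^ S i) (dirac G') rho); [apply pow_le1; lra| | intros; reflexivity |].
    + intros _. eapply ct_base; eauto.
    + intros s. rewrite Hr. simpl. ring.
  - intros s. rewrite Hr. simpl. ring.
  - intros s. pose proof (GP_infinite p ltac:(rewrite Rabs_pos_eq; lra)) as Hg. unfold Pser in Hg.
    eapply inf_sum_ext. apply (inf_sum_scal _ _ ((1 - p) * mu s) Hg).
    intros n; simpl; ring. field. lra.
Qed.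

Lemma wtau_of_step (G : nexpr) (mu : dist) : step G tau mu -> wtau (dirac G) mu.
Proof.
  intros H. apply (wtau_pre _ mu). apply (ct_base (E:=G)); [intros; reflexivity| exact H].
  apply wtau_refl. eapply step_subdist; eauto. apply subdist_dirac.
Qed.

Lemma wtrans_of_step (G : nexpr) a (mu : dist) : step G a mu -> wtrans (dirac G) a mu.
Proof.
  intros H. exists (dirac G), mu. split; [apply wtau_refl, subdist_dirac|split].
  apply (ct_base (E:=G)); [intros; reflexivity| exact H]. apply wtau_refl. eapply step_subdist; eauto.
Qed.

Lemma wtrans_hat_of_step (G : nexpr) a (mu : dist) : step G a mu -> wtrans_hat (dirac G) a mu.
Proof. destruct a; simpl; [apply wtau_of_step| apply wtrans_of_step]. Qed.

Lemma lift_mono (R1 R2 : nexpr -> nexpr -> Prop) (mu nu : dist) :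
  (forall x y, R1 x y -> R2 x y) -> lift R1 mu nu -> lift R2 mu nu.
Proof.
  intros H. induction 1. eapply lift_base; eauto. eapply lift_comb; eauto.
Qed.

End Gen.
Arguments zero {L V}.
Arguments fsum {L V}.
Arguments fsum_lin {L V}.
Arguments fsum_nonneg {L V}.
Arguments subdist_comb2 {L V}.
Arguments subdist_zero {L V}.
Arguments subdist_scale {L V}.
Arguments subdist_ext {L V}.
Arguments fsum_dirac_notin {L V}.
Arguments subdist_dirac {L V}.
Arguments psem_subdist {L V}.
Arguments step_subdist {L V}.
Arguments psem_exists {L V}.
Arguments psem_fun {L V}.
Arguments ct_single {L V}.
Arguments ctrans_ext {L V}.
Arguments wtau_refl {L V}.
Arguments wtau_pre {L V}.
Arguments wtau_geom {L V}.
Arguments wtau_of_step {L V}.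
Arguments wtrans_of_step {L V}.
Arguments wtrans_hat_of_step {L V}.
Arguments lift_mono {L V}.


Scheme nexpr_mut := Induction for nexpr Sort Prop
with pexpr_mut := Induction for pexpr Sort Prop.
Combined Scheme np_mut from nexpr_mut, pexpr_mut.

Section Syn.
Variables L V : Type.
Notation nexpr := (nexpr L V).
Notation pexpr := (pexpr L V).

Definition closedP (P : pexpr) := forall x, ~ freeP x P.

Lemma subst_id :
  (forall G : nexpr, forall s, (forall y, freeN y G -> s y = None) -> substN s G = G) /\
  (forall P : pexpr, forall s, (forall y, freeP y P -> s y = None) -> substP s P = P).
Proof.
  apply (np_mut L V (fun G => forall s, (forall y, freeN y G -> s y = None) -> substN s G = G)
                    (fun P => forall s, (forall y, freeP y P -> s y = None) -> substP s P = P));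
  simpl; intros.
  - reflexivity.
  - rewrite H; auto.
  - f_equal; auto.
  - f_equal. apply H. intros y Hy. destruct (eqdec_spec y v) as [[_ ->]|[ne ->]]; auto.
  - f_equal; auto.
  - f_equal; auto.
  - f_equal; auto.
Qed.

Lemma free_subst :
  (forall G : nexpr, forall s y, freeN y (substN s G) -> exists z, freeN z G /\
      ((s z = None /\ y = z) \/ (exists H, s z = Some H /\ freeN y H))) /\
  (forall P : pexpr, forall s y, freeP y (substP s P) -> exists z, freeP z P /\
      ((s z = None /\ y = z) \/ (exists H, s z = Some H /\ freeN y H))).
Proof.
  apply (np_mut L V (fun G => forall s y, freeN y (substN s G) -> exists z, freeN z G /\
      ((s z = None /\ y = z) \/ (exists H, s z = Some H /\ freeN y H)))
      (fun P => forall s y, freeP y (substP s P) -> exists z, freeP z P /\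
      ((s z = None /\ y = z) \/ (exists H, s z = Some H /\ freeN y H))));
  simpl; intros.
  - contradiction.
  - exists v. split; auto. destruct (s v) eqn:E; [right; exists n; auto| left; auto].
  - auto.
  - destruct H0 as [ne Hf]. destruct (H _ _ Hf) as [z [Hz [[Hn Heq]|[H' [Hs Hy]]]]].
    + subst z. exists y. destruct (eqdec_spec y v) as [[e _]|[e Hq]]; [contradiction|].
      rewrite Hq in Hn. split; [split; auto| left; auto].
    + exists z. destruct (eqdec_spec z v) as [[e Hq]|[e Hq]]; rewrite Hq in Hs; [discriminate|].
      split; [split; auto| right; eauto].
  - destruct H1 as [Hf|Hf].
    + destruct (H _ _ Hf) as [z [Hz Hr]]. exists z; auto.
    + destruct (H0 _ _ Hf) as [z [Hz Hr]]. exists z; auto.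
  - auto.
  - destruct H1 as [Hf|Hf].
    + destruct (H _ _ Hf) as [z [Hz Hr]]. exists z; auto.
    + destruct (H0 _ _ Hf) as [z [Hz Hr]]. exists z; auto.
Qed.

Lemma closed_subst1 (Y : V) (H G : nexpr) : closedN (NRec Y H) -> closedN G -> closedN (subst1 Y G H).
Proof.
  intros c1 c2 y Hy. destruct (proj1 free_subst _ _ _ Hy) as [z [Hz [[Hn Heq]|[H' [Hs Hf]]]]].
  - subst z. destruct (eqdec_spec y Y) as [[e Hq]|[e Hq]]; rewrite Hq in Hn; [discriminate|].
    apply (c1 y). simpl; auto.
  - destruct (eqdec_spec z Y) as [[e Hq]|[e Hq]]; rewrite Hq in Hs; [|discriminate].
    injection Hs as <-. apply (c2 y Hf).
Qed.

Lemma closed_all (sigma : V -> nexpr) (G : nexpr) : (forall y, closedN (sigma y)) ->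
  closedN (substN (fun y => Some (sigma y)) G).
Proof.
  intros Hs y Hy. destruct (proj1 free_subst _ _ _ Hy) as [z [Hz [[Hn _]|[H' [Hq Hf]]]]].
  - discriminate.
  - injection Hq as <-. apply (Hs z y Hf).
Qed.

End Syn.
Arguments closedP {L V}.
Arguments closed_subst1 {L V}.
Arguments closed_all {L V}.


Section Main.
Variables (L V : Type) (X : V) (E0 F0 : nexpr L V) (P0 : pexpr L V) (pr : prob).
Notation nexpr := (nexpr L V).
Notation pexpr := (pexpr L V).
Notation dist := (Defs.dist L V).

Definition Q0 : pexpr := PChoice (PDirac (NSum (NVar X) E0)) P0 pr.
Definition DA : nexpr := NSum (NPre tau Q0) F0.
Definition DB : nexpr := NSum (NSum (NPre tau Q0) (NPre tau P0)) F0.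
Definition A : nexpr := NRec X DA.
Definition B : nexpr := NRec X DB.
Hypothesis hA : closedN A.
Hypothesis hB : closedN B.

Inductive simR : nexpr -> nexpr -> Prop :=
| sr_AB : simR A B
| sr_0 : simR Defs.N0 Defs.N0
| sr_var y : simR (NVar y) (NVar y)
| sr_pre a P1 P2 : simP P1 P2 -> simR (NPre a P1) (NPre a P2)
| sr_rec Y G1 G2 : simR G1 G2 -> simR (NRec Y G1) (NRec Y G2)
| sr_sum G1 G2 H1 H2 : simR G1 G2 -> simR H1 H2 -> simR (NSum G1 H1) (NSum G2 H2)
with simP : pexpr -> pexpr -> Prop :=
| sp_dirac G1 G2 : simR G1 G2 -> simP (PDirac G1) (PDirac G2)
| sp_choice P1 P2 Q1 Q2 q : simP P1 Q1 -> simP P2 Q2 -> simP (PChoice P1 P2 q) (PChoice Q1 Q2 q).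

Scheme simR_mut := Induction for simR Sort Prop
with simP_mut := Induction for simP Sort Prop.
Combined Scheme simRP_mut from simR_mut, simP_mut.

Lemma sim_refl : (forall G : nexpr, simR G G) /\ (forall P : pexpr, simP P P).
Proof.
  apply (np_mut L V (fun G => simR G G) (fun P => simP P P)); intros; constructor; auto.
Qed.

Definition relmap (s1 s2 : V -> option nexpr) := forall z,
  (s1 z = None /\ s2 z = None) \/ exists H1 H2, s1 z = Some H1 /\ s2 z = Some H2 /\ simR H1 H2.

Lemma sim_subst :
  (forall G1 G2, simR G1 G2 -> forall s1 s2, relmap s1 s2 -> simR (substN s1 G1) (substN s2 G2)) /\
  (forall P1 P2, simP P1 P2 -> forall s1 s2, relmap s1 s2 -> simP (substP s1 P1) (substP s2 P2)).
Proof.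
  apply (simRP_mut (fun G1 G2 _ => forall s1 s2, relmap s1 s2 -> simR (substN s1 G1) (substN s2 G2))
                   (fun P1 P2 _ => forall s1 s2, relmap s1 s2 -> simP (substP s1 P1) (substP s2 P2)));
  intros.
  - rewrite (proj1 (subst_id L V) A), (proj1 (subst_id L V) B).
    constructor. intros y Hy; exfalso; exact (hB y Hy). intros y Hy; exfalso; exact (hA y Hy).
  - constructor.
  - simpl. destruct (H y) as [[-> ->]|(H1 & H2 & -> & -> & Hs)]; [constructor| exact Hs].
  - simpl. constructor; auto.
  - simpl. constructor. apply H. intros z. destruct (eqdec z Y); [left; auto| apply H0].
  - simpl. constructor; auto.
  - simpl. constructor; auto.
  - simpl. constructor; auto.
Qed.

Lemma relmap1 (Y : V) (H1 H2 : nexpr) : simR H1 H2 ->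
  relmap (fun z => if eqdec z Y then Some H1 else None) (fun z => if eqdec z Y then Some H2 else None).
Proof. intros Hs z. destruct (eqdec z Y); [right; exists H1, H2; auto| left; auto]. Qed.

Definition Rel (G1 G2 : nexpr) := simR G1 G2 /\ closedN G1 /\ closedN G2.

Lemma psem_lift (P1 : pexpr) (mu : dist) : psem P1 mu -> forall P2 nu, simP P1 P2 -> closedP P1 -> closedP P2 ->
  psem P2 nu -> lift Rel mu nu.
Proof.
  induction 1 as [E mu He|P Q p mu1 mu2 rho HP IH1 HQ IH2 Hr]; intros P2 nu Hs c1 c2 Hn.
  - inversion Hs; subst. inversion Hn; subst.
    eapply lift_base; eauto. split; [auto|split].
    intros x hx; exact (c1 x hx). intros x hx; exact (c2 x hx).
  - inversion Hs; subst. inversion Hn; subst.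
    rename H3 into HS1, H4 into HS2, H2 into Hn1, H6 into Hn2, H7 into Hnu, mu into n1, nu0 into n2.
    destruct p as [p hp]; simpl in *.
    set (w := fun i : nat => match i with O => p | S O => 1 - p | _ => 0 end).
    assert (Hw : forall n, sum_f_R0 w (S n) = 1).
    { induction n; simpl in *. unfold w; ring. rewrite IHn. ring. }
    apply (@lift_comb _ _ Rel w (fun i => match i with O => mu1 | _ => mu2 end)
                                (fun i => match i with O => n1 | _ => n2 end)).
    + split. intros [|[|i]]; unfold w; lra.
      intros [|n]. simpl; unfold w; lra. rewrite Hw; lra.
    + intros [|[|i]] Hpos.
      * eapply IH1; eauto. intros x hx; apply (c1 x); simpl; auto. intros x hx; apply (c2 x); simpl; auto.
      * eapply IH2; eauto. intros x hx; apply (c1 x); simpl; auto. intros x hx; apply (c2 x); simpl; auto.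
      * unfold w in Hpos; lra.
    + intros s. apply inf_sum_ev. exists 1%nat. intros [|n] Hn'; [lia|].
      rewrite Hr. clear Hw. induction n; simpl; unfold w. ring. simpl in IHn. unfold w in IHn.
      rewrite IHn by lia. ring.
    + intros s. apply inf_sum_ev. exists 1%nat. intros [|n] Hn'; [lia|].
      rewrite Hnu. clear Hw. induction n; simpl; unfold w. ring. simpl in IHn. unfold w in IHn.
      rewrite IHn by lia. ring.
Qed.


Definition sA := fun z => if eqdec z X then Some A else None.
Definition sB := fun z => if eqdec z X then Some B else None.
Definition Qa := substP sA Q0.
Definition Pa := substP sA P0.
Definition Fa := substN sA F0.
Definition Qb := substP sB Q0.
Definition Pb := substP sB P0.
Definition Fb := substN sB F0.

Lemma stepA_inv a (mu : dist) : step A a mu -> step (NSum (NPre tau Qa) Fa) a mu.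
Proof. unfold A. intros H; inversion H; subst. exact H4. Qed.
Lemma stepA_intro a (mu : dist) : step (NSum (NPre tau Qa) Fa) a mu -> step A a mu.
Proof. intros H. apply st_rec. exact H. Qed.
Lemma stepB_inv a (mu : dist) : step B a mu -> step (NSum (NSum (NPre tau Qb) (NPre tau Pb)) Fb) a mu.
Proof. unfold B. intros H; inversion H; subst. exact H4. Qed.
Lemma stepB_intro a (mu : dist) : step (NSum (NSum (NPre tau Qb) (NPre tau Pb)) Fb) a mu -> step B a mu.
Proof. intros H. apply st_rec. exact H. Qed.

Lemma closedA_unf : closedN (NSum (NPre tau Qa) Fa).
Proof. exact (closed_subst1 X DA A hA hA). Qed.
Lemma closedB_unf : closedN (NSum (NSum (NPre tau Qb) (NPre tau Pb)) Fb).
Proof. exact (closed_subst1 X DB B hB hB). Qed.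

Lemma cQa : closedP Qa. Proof. intros x hx. apply (closedA_unf x). simpl. auto. Qed.
Lemma cFa : closedN Fa. Proof. intros x hx. apply (closedA_unf x). simpl. auto. Qed.
Lemma cPa : closedP Pa. Proof. intros x hx. apply (cQa x). unfold Qa, Q0. simpl. auto. Qed.
Lemma cQb : closedP Qb. Proof. intros x hx. apply (closedB_unf x). simpl. auto. Qed.
Lemma cPb : closedP Pb. Proof. intros x hx. apply (closedB_unf x). simpl. auto. Qed.
Lemma cFb : closedN Fb. Proof. intros x hx. apply (closedB_unf x). simpl. auto. Qed.

Lemma relAB : relmap sA sB.
Proof. apply relmap1. constructor. Qed.
Lemma sQ : simP Qa Qb. Proof. apply (proj2 sim_subst). apply (proj2 sim_refl). apply relAB. Qed.
Lemma sP : simP Pa Pb. Proof. apply (proj2 sim_subst). apply (proj2 sim_refl). apply relAB. Qed.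
Lemma sF : simR Fa Fb. Proof. apply (proj1 sim_subst). apply (proj1 sim_refl). apply relAB. Qed.

Lemma cNSum1 (G H : nexpr) : closedN (NSum G H) -> closedN G.
Proof. intros c x hx. apply (c x). simpl; auto. Qed.
Lemma cNSum2 (G H : nexpr) : closedN (NSum G H) -> closedN H.
Proof. intros c x hx. apply (c x). simpl; auto. Qed.

Lemma simA : forall G1 a (mu : dist), step G1 a mu -> forall G2, simR G1 G2 -> closedN G1 -> closedN G2 ->
  exists nu, step G2 a nu /\ lift Rel mu nu.
Proof.
  induction 1 as [a P mu Hp | Y H a mu Hst IH | E F a mu Hst IH | E F a mu Hst IH]; intros G2 Hs c1 c2.
  - inversion Hs; subst.
    destruct (psem_exists P2) as [nu Hn]. exists nu. split; [constructor; auto|].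
    eapply psem_lift; eauto; try (intros x hx; exact (c1 x hx)); try (intros x hx; exact (c2 x hx)).
  - inversion Hs; subst.
    + destruct (IH (NSum (NPre tau Qb) Fb)) as [nu [Hn Hl]].
      * constructor. constructor. exact sQ. exact sF.
      * exact closedA_unf.
      * intros x hx. apply (closedB_unf x). simpl in hx |- *. tauto.
      * exists nu. split; auto. apply stepB_intro. inversion Hn; subst.
        apply st_suml, st_suml; auto. apply st_sumr; auto.
    + match goal with Hx : simR H ?G |- _ => rename G into G3 end.
      destruct (IH (subst1 Y (NRec Y G3) G3)) as [nu [Hn Hl]].
      * apply (proj1 sim_subst); auto. apply relmap1. constructor; auto.
      * apply closed_subst1; auto.
      * apply closed_subst1; auto.
      * exists nu. split; auto. apply st_rec; auto.
  - inversion Hs; subst.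
    match goal with Hx : simR E ?G |- _ => rename G into G3 end.
    destruct (IH G3) as [nu [Hn Hl]]; eauto using cNSum1.
    exists nu. split; auto. apply st_suml; auto.
  - inversion Hs; subst.
    match goal with Hx : simR F ?G |- _ => rename G into H2 end.
    destruct (IH H2) as [nu [Hn Hl]]; eauto using cNSum2.
    exists nu. split; auto. apply st_sumr; auto.
Qed.

Definition special (G1 : nexpr) (nu : dist) :=
  (exists mu, psem Pa mu /\ lift Rel mu nu) /\ (exists rho, psem Qa rho /\ step G1 tau rho).

Lemma A_tau : exists rho, psem Qa rho /\ step A tau rho.
Proof.
  destruct (psem_exists Qa) as [rho Hr]. exists rho. split; auto.
  apply stepA_intro, st_suml. constructor; auto.
Qed.

Lemma simB : forall G2 a (nu : dist), step G2 a nu -> forall G1, simR G1 G2 -> closedN G1 -> closedN G2 ->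
  (exists mu, step G1 a mu /\ lift Rel mu nu) \/ (a = tau /\ special G1 nu).
Proof.
  induction 1 as [a P nu Hp | Y H a nu Hst IH | E F a nu Hst IH | E F a nu Hst IH]; intros G1 Hs c1 c2.
  - inversion Hs; subst.
    match goal with Hx : simP ?Q P |- _ => rename Q into P1 end.
    destruct (psem_exists P1) as [mu Hn]. left. exists mu. split; [constructor; auto|].
    eapply psem_lift; eauto; try (intros x hx; exact (c1 x hx)); try (intros x hx; exact (c2 x hx)).
  - inversion Hs; subst.
    + destruct (IH (NSum (NSum (NPre tau Qa) (NPre tau Pa)) Fa)) as [[mu [Hn Hl]]|[Ha Hsp]].
      * constructor. constructor; constructor. exact sQ. exact sP. exact sF.
      * intros x hx. simpl in hx. destruct hx as [[hx|hx]|hx].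
        exact (cQa x hx). exact (cPa x hx). exact (cFa x hx).
      * exact closedB_unf.
      * inversion Hn; subst.
        -- match goal with Hx : step (NSum _ _) _ _ |- _ => inversion Hx; subst end.
           ++ left. exists mu. split; auto. apply stepA_intro, st_suml. auto.
           ++ match goal with Hx : step (NPre _ _) _ _ |- _ => inversion Hx; subst end.
              right. split; auto. split. exists mu; auto. exact A_tau.
        -- left. exists mu. split; auto. apply stepA_intro, st_sumr. auto.
      * right. split; auto. split. exact (proj1 Hsp). exact A_tau.
    + match goal with Hx : simR ?G H |- _ => rename G into G3 end.
      destruct (IH (subst1 Y (NRec Y G3) G3)) as [[mu [Hn Hl]]|[Ha [Hsp1 [rho [Hr Hsr]]]]].
      * apply (proj1 sim_subst); auto. apply relmap1. constructor; auto.
      * apply closed_subst1; auto.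
      * apply closed_subst1; auto.
      * left. exists mu. split; auto. apply st_rec; auto.
      * right. split; auto. split; auto. exists rho. split; auto. apply st_rec; auto.
  - inversion Hs; subst.
    match goal with Hx : simR ?G E |- _ => rename G into G3 end.
    destruct (IH G3) as [[mu [Hn Hl]]|[Ha [Hsp1 [rho [Hr Hsr]]]]]; eauto using cNSum1.
    + left. exists mu. split; auto. apply st_suml; auto.
    + right. split; auto. split; auto. exists rho. split; auto. apply st_suml; auto.
  - inversion Hs; subst.
    match goal with Hx : simR ?G F |- _ => rename G into H3 end.
    destruct (IH H3) as [[mu [Hn Hl]]|[Ha [Hsp1 [rho [Hr Hsr]]]]]; eauto using cNSum2.
    + left. exists mu. split; auto. apply st_sumr; auto.
    + right. split; auto. split; auto. exists rho. split; auto. apply st_sumr; auto.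
Qed.

Lemma sA_X : substN sA (NVar X) = A.
Proof. simpl. unfold sA. rewrite eqdec_true. reflexivity. Qed.

Lemma special_w G1 nu : special G1 nu ->
  exists mu, wtau (dirac G1) mu /\ wtrans (dirac G1) tau mu /\ lift Rel mu nu.
Proof.
  intros [[mu [Hm Hl]] [rho [Hr Hs]]].
  assert (Hg : wtau rho mu).
  { pose proof Hr as Hr'. unfold Qa, Q0 in Hr'. simpl substP in Hr'.
    inversion Hr'; subst.
    match goal with Hx : psem (PDirac _) ?m |- _ => inversion Hx; subst; rename m into m1 end.
    match goal with Hx : psem (substP sA P0) ?m |- _ => rename m into m2, Hx into Hm2 end.
    apply (wtau_geom (NSum (substN sA (NVar X)) (substN sA E0)) (proj1_sig pr) mu rho); auto.
    - exact (proj2_sig pr).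
    - eapply psem_subdist; eauto.
    - rewrite sA_X. apply st_suml. apply stepA_intro, st_suml. constructor. exact Hr.
    - intros s. match goal with Hx : forall s, rho s = _ |- _ => rewrite Hx end.
      match goal with Hx : forall s, m1 s = _ |- _ => rewrite Hx end.
      rewrite (psem_fun _ _ Hm2 _ Hm). reflexivity. }
  exists mu. split; [|split]; auto.
  - apply (wtau_pre _ rho). apply (ct_base (E:=G1)); [intros; reflexivity| exact Hs]. exact Hg.
    apply subdist_dirac.
  - exists (dirac G1), rho. split; [apply wtau_refl, subdist_dirac|split; auto].
    apply (ct_base (E:=G1)); [intros; reflexivity| exact Hs].
Qed.

Lemma Rel_bisim : is_wbisim Rel.
Proof.
  intros G1 G2 [Hs [c1 c2]]. split; [auto|split; [auto|split]].
  - intros a mu Hst. destruct (simA _ _ _ Hst _ Hs c1 c2) as [nu [Hn Hl]].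
    exists nu. split; auto. apply wtrans_hat_of_step; auto.
  - intros a nu Hst. destruct (simB _ _ _ Hst _ Hs c1 c2) as [[mu [Hn Hl]]|[-> Hsp]].
    + exists mu. split; auto. apply wtrans_hat_of_step; auto.
    + destruct (special_w _ _ Hsp) as [mu [Hw [_ Hl]]]. exists mu. split; auto.
Qed.

Lemma Rel_wbisim : forall G1 G2, Rel G1 G2 -> wbisim G1 G2.
Proof. intros G1 G2 H. exists Rel. split; auto. exact Rel_bisim. Qed.

Lemma AB_rcong : rcong_closed A B.
Proof.
  split.
  - intros a mu Hst. destruct (simA _ _ _ Hst _ sr_AB hA hB) as [nu [Hn Hl]].
    exists nu. split. apply wtrans_of_step; auto. eapply lift_mono; [apply Rel_wbisim| exact Hl].
  - intros a nu Hst. destruct (simB _ _ _ Hst _ sr_AB hA hB) as [[mu [Hn Hl]]|[-> Hsp]].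
    + exists mu. split. apply wtrans_of_step; auto. eapply lift_mono; [apply Rel_wbisim| exact Hl].
    + destruct (special_w _ _ Hsp) as [mu [_ [Hw Hl]]]. exists mu. split; auto.
      eapply lift_mono; [apply Rel_wbisim| exact Hl].
Qed.

End Main.


Theorem mainTheorem4 (L V : Type) (E F : nexpr L V) (P : pexpr L V) (X : V)
  (p : R) (hp : 0 < p < 1) :
  rcong
    (NRec X (NSum (NPre tau (PChoice (PDirac (NSum (NVar X) E)) P (exist _ p hp))) F))
    (NRec X (NSum (NSum (NPre tau (PChoice (PDirac (NSum (NVar X) E)) P (exist _ p hp)))
                        (NPre tau P)) F)).
Proof.
  intros sigma Hs.
  set (s' := fun z => if eqdec z X then None else Some (sigma z)).
  assert (eA : substN (fun y => Some (sigma y))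
    (NRec X (NSum (NPre tau (PChoice (PDirac (NSum (NVar X) E)) P (exist _ p hp))) F))
    = A L V X (substN s' E) (substN s' F) (substP s' P) (exist _ p hp)).
  { simpl. rewrite eqdec_true. reflexivity. }
  assert (eB : substN (fun y => Some (sigma y))
    (NRec X (NSum (NSum (NPre tau (PChoice (PDirac (NSum (NVar X) E)) P (exist _ p hp)))
                        (NPre tau P)) F))
    = B L V X (substN s' E) (substN s' F) (substP s' P) (exist _ p hp)).
  { simpl. rewrite eqdec_true. reflexivity. }
  rewrite eA, eB. apply AB_rcong.
  - rewrite <- eA. apply closed_all; auto.
  - rewrite <- eB. apply closed_all; auto.
Qed.
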